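(* Let $p$ be an odd prime and $n\geq 3$ an integer. Let $G$ be the extraspecial group of order $p^{2n+1}$ and exponent $p$, written as $G=\langle x_1,\dots,x_n,y_1,\dots,y_n\rangle$ with $Z(G)=G'=\langle c\rangle$ of order $p$, where $[x_i,x_j]=1$, $[y_i,y_j]=1$ for all $i,j$, $[x_i,y_i]=c$ for all $i$, and $[x_i,y_j]=1$ for $i\neq j$. Then the assignment $x_1\mapsto x_1$, $x_2\mapsto x_1x_2$, $x_3\mapsto x_2x_3$, $x_i\mapsto x_i$ for $i>3$, $y_1\mapsto y_1y_2^{-1}y_3$, $y_2\mapsto y_2y_3^{-1}$, $y_i\mapsto y_i$ for $i>2$ extends to an automorphism $\alpha$ of $G$ of order $p$, and the semidirect product $P=G\rtimes\langle\alpha\rangle$ (of order $p^{2n+2}$) has derived length $3$ and $\mathrm{cd}(P)=\{1,p,p^n\}$.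
   Context: Commutators are $[g,h]=g^{-1}h^{-1}gh$. For a finite group $X$, $\mathrm{cd}(X)=\{\chi(1)\mid \chi\in\mathrm{Irr}(X)\}$ is the set of degrees of the complex irreducible characters of $X$. The derived length of a solvable group is the least $k$ with $X^{(k)}=1$, where $X^{(0)}=X$ and $X^{(i+1)}=[X^{(i)},X^{(i)}]$. *)

(* Defs.v *)
From mathcomp Require Import all_boot all_order all_algebra all_fingroup all_solvable all_field all_character.
Set Implicit Arguments. Unset Strict Implicit. Unset Printing Implicit Defensive.
Import GroupScope.

Definition cd (gT : finGroupType) (X : {group gT}) : pred algC :=
  [pred d | [exists i : Iirr X, ('chi[X]_i 1%g == d)%R]].

Definition has_derived_length (gT : finGroupType) (X : {group gT}) (k : nat) : Prop :=
  X^`(k) = 1 /\ (forall j, j < k -> X^`(j) != 1).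

(* The (external) semidirect product G x| <[a]> for an automorphism a of G,
   realised as the subgroup  G * <[a]>  of the external semidirect product
   G x| Aut(G) (action of Aut G on G by evaluation). *)
Definition sdprod_cyc_aut (gT : finGroupType) (G : {group gT}) (a : {perm gT})
  : {group sdprod_by (aut_groupAction G)} :=
  (sdpair1 (aut_groupAction G) @* G <*> sdpair2 (aut_groupAction G) @* <[a]>)%G.

(* Main.v *)
Require Import Defs.
From mathcomp Require Import all_boot all_order all_algebra all_fingroup all_solvable all_field all_character.
From mathcomp Require Import zify.
Set Implicit Arguments. Unset Strict Implicit. Unset Printing Implicit Defensive.
Import GroupScope.

Section CardBound.
Variable hT : finGroupType.

Definition Wset (w : nat -> hT) k : {set hT} := [set w (val i) | i : 'I_k].

Lemma WsetS w k : Wset w k.+1 = w k |: Wset w k.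
Proof.
apply/setP=> g; apply/imsetP/setU1P => [[i _ ->] | [-> | /imsetP[i _ ->]]].
- have := ltn_ord i; rewrite ltnS leq_eqVlt => /orP[Ei | lt]; first by left; congr w; exact/eqP.
  by right; apply/imsetP; exists (Ordinal lt).
- by exists ord_max.
- by exists (widen_ord (leqnSn k) i).
Qed.

Lemma ab_card (w : nat -> hT) p k :
  0 < p ->
  (forall i j, i < k -> j < k -> commute (w i) (w j)) ->
  (forall i, i < k -> w i ^+ p = 1) ->
  #|<<Wset w k>>| <= p ^ k.
Proof.
move=> p0; elim: k => [|k IH] cw wp.
  have -> : Wset w 0 = set0.
    by apply/setP=> g; rewrite inE; apply/imsetP=> -[i]; by have := ltn_ord i.
  by rewrite gen0 cards1.
rewrite WsetS.
have IH' := IH (fun i j Hi Hj => cw i j (ltnW Hi) (ltnW Hj)) (fun i Hi => wp i (ltnW Hi)).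
have cW : commute <[w k]> <<Wset w k>>.
  have H : w k \in 'C(Wset w k).
    apply/centP=> _ /imsetP[i _ ->]; exact: cw (leqnn _) (ltnW (ltn_ord i)).
  rewrite -cent_gen in H; apply: centC; rewrite cycle_subG; exact: H.
have sub : <<w k |: Wset w k>> \subset <[w k]> * <<Wset w k>>.
  rewrite -comm_joingE // gen_subG; apply/subsetP=> g /setU1P[->|Wg].
    by apply: (subsetP (joing_subl _ _)); rewrite cycle_id.
  by apply: (subsetP (joing_subr _ _)); rewrite mem_gen.
apply: leq_trans (subset_leq_card sub) _.
have := mul_cardG <[w k]> <<Wset w k>>.
have : 0 < #|<[w k]> :&: <<Wset w k>>| by apply/card_gt0P; exists 1; rewrite group1.
move=> pos eq.
have le1 : #|<[w k]> * <<Wset w k>>| <= #|<[w k]>| * #|<<Wset w k>>|.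
  by rewrite eq leq_pmulr.
apply: leq_trans le1 _; rewrite expnS leq_mul //.
apply: dvdn_leq p0 _; rewrite order_dvdn wp //.
Qed.

Lemma eq_Wset (w w' : nat -> hT) k : (forall i, i < k -> w i = w' i) -> Wset w k = Wset w' k.
Proof.
move=> E; apply/setP=> g; apply/imsetP/imsetP=> -[i _ ->]; exists i => //;
  first [exact: E (ltn_ord i) | exact: esym (E _ (ltn_ord i))].
Qed.

Lemma card_bound (u v : nat -> hT) (d : hT) p n :
  0 < p ->
  (forall i, i < n -> u i ^+ p = 1) -> (forall i, i < n -> v i ^+ p = 1) -> d ^+ p = 1 ->
  (forall i, i < n -> commute (u i) d) -> (forall i, i < n -> commute (v i) d) ->
  (forall i j, i < n -> j < n -> commute (u i) (u j)) ->
  (forall i j, i < n -> j < n -> commute (v i) (v j)) ->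
  (forall i j, i < n -> j < n -> [~ u i, v j] \in <[d]>) ->
  #|<<Wset u n :|: Wset v n>>| <= p ^ (2 * n + 1).
Proof.
move=> p0 up vp dp ud vd uu vv uv.
pose u' i := if i == n then d else u i.
have EU : Wset u' n.+1 = d |: Wset u n.
  rewrite WsetS /u' eqxx; congr (_ |: _); apply: eq_Wset => i lt.
  by rewrite (ltn_eqF lt).
set U := <<Wset u' n.+1>>.
have lt_of : forall i, i < n.+1 -> i != n -> i < n.
  by move=> i; rewrite ltnS ltn_neqAle => -> ->.
have cU : #|U| <= p ^ n.+1.
  apply: (ab_card p0).
    move=> i j li lj; rewrite /u'.
    have [ein|nin] := eqVneq i n; have [ejn|njn] := eqVneq j n.
    - exact: commute_refl.
    - exact: commute_sym (ud _ (lt_of _ lj njn)).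
    - exact: ud (lt_of _ li nin).
    - exact: uu (lt_of _ li nin) (lt_of _ lj njn).
  move=> i li; rewrite /u'; have [ein|nin] := eqVneq i n; first exact: dp.
  exact: up (lt_of _ li nin).
set V := <<Wset v n>>.
have cV : #|V| <= p ^ n by apply: ab_card.
have dU : d \in U by rewrite mem_gen // EU setU11.
have uU : forall i, i < n -> u i \in U.
  move=> i li; rewrite mem_gen // EU setU1r //; apply/imsetP; exists (Ordinal li) => //.
have nUV : V \subset 'N(U).
  rewrite gen_subG; apply/subsetP=> _ /imsetP[j _ ->]; rewrite inE -genJ gen_subG.
  apply/subsetP=> _ /imsetP[g Hg ->]; rewrite EU in Hg.
  case/setU1P: Hg => [->|/imsetP[i _ ->]].
    have /commgP/conjg_fixP -> : commute d (v j) by apply: commute_sym; apply: vd.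
    exact: dU.
  have sdU : <[d]> \subset U by rewrite cycle_subG.
  rewrite conjg_mulR groupM ?uU ?ltn_ord //; exact: (subsetP sdU _ (uv _ _ (ltn_ord i) (ltn_ord j))).
have sub : <<Wset u n :|: Wset v n>> \subset U * V.
  rewrite -norm_joinEr // gen_subG; apply/subsetP=> g /setUP[/imsetP[i _ ->]|Vg].
    by apply: (subsetP (joing_subl _ _)); exact: uU (ltn_ord i).
  by apply: (subsetP (joing_subr _ _)); rewrite mem_gen.
apply: leq_trans (subset_leq_card sub) _.
have := mul_cardG U V.
have : 0 < #|U :&: V| by apply/card_gt0P; exists 1; rewrite group1.
move=> pos eq.
have le1 : #|U * V| <= #|U| * #|V| by rewrite eq leq_pmulr.
apply: leq_trans le1 _.
by rewrite mul2n -addnn addn1 -addSn expnD leq_mul.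
Qed.
End CardBound.

Section PairLemmas.
Variable gT : finGroupType.
Implicit Types a b : gT.
Lemma pairM a b a' b' : ((a, b) : gT * gT) * (a', b') = (a * a', b * b').
Proof. by []. Qed.
Lemma pairX a b k : ((a, b) : gT * gT) ^+ k = (a ^+ k, b ^+ k).
Proof. by elim: k => [|k IH] //; rewrite !expgS IH. Qed.
Lemma pairR a b a' b' : [~ ((a, b) : gT * gT), (a', b')] = ([~ a, a'], [~ b, b']).
Proof. by []. Qed.
Lemma pair_comm a b a' b' : commute a a' -> commute b b' ->
  commute ((a, b) : gT * gT) (a', b').
Proof. by rewrite /commute !pairM => -> ->. Qed.
End PairLemmas.

Lemma imset_Wset (hT rT : finType) (f : hT -> rT) (w : nat -> hT) k :
  f @: [set w (val i) | i : 'I_k] = [set f (w (val i)) | i : 'I_k].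
Proof.
apply/setP=> g; apply/imsetP/imsetP => [[h /imsetP[i _ ->] ->] | [i _ ->]].
  by exists i.
by exists (w (val i)) => //; apply/imsetP; exists i.
Qed.

Section Construct.
Variables (p n : nat) (gT : finGroupType) (G : {group gT}) (x y : nat -> gT) (c : gT).
Hypotheses (pr : prime p) (n3 : 3 <= n) (cardG : #|G| = (p ^ (2 * n + 1))%N)
  (expG : exponent G = p)
  (genG : G :=: << [set x (val i) | i : 'I_n] :|: [set y (val i) | i : 'I_n] >>)
  (ZG : 'Z(G) = <[c]>) (DG : G^`(1) = <[c]>) (oc : #[c] = p)
  (hx : forall i j, i < n -> j < n -> [~ x i, x j] = 1)
  (hy : forall i j, i < n -> j < n -> [~ y i, y j] = 1)
  (hxy : forall i, i < n -> [~ x i, y i] = c)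
  (hxy' : forall i j, i < n -> j < n -> i != j -> [~ x i, y j] = 1).

Let n0 : 0 < n. Proof. exact: leq_trans n3. Qed.
Let n1 : 1 < n. Proof. exact: leq_trans n3. Qed.
Let n2 : 2 < n. Proof. exact: n3. Qed.

Let xG i : i < n -> x i \in G.
Proof.
move=> li; rewrite genG mem_gen // inE; apply/orP; left; apply/imsetP.
by exists (Ordinal li).
Qed.
Let yG i : i < n -> y i \in G.
Proof.
move=> li; rewrite genG mem_gen // inE; apply/orP; right; apply/imsetP.
by exists (Ordinal li).
Qed.

Lemma zc z g : z \in <[c]> -> g \in G -> commute z g.
Proof.
rewrite -ZG => /setIP[_ /centP Cz] Gg; exact: Cz.
Qed.

Let cG : c \in G.
Proof. by have := cycle_id c; rewrite -ZG => /setIP[]. Qed.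

Lemma commRc g h : g \in G -> h \in G -> [~ g, h] \in <[c]>.
Proof. by move=> Gg Gh; rewrite -DG mem_commg. Qed.

Lemma commMl g h z : g \in G -> h \in G -> z \in G ->
  [~ g * h, z] = [~ g, z] * [~ h, z].
Proof.
move=> Gg Gh Gz; rewrite commMgJ; congr (_ * _).
by apply/conjg_fixP/commgP; apply: zc; rewrite ?commRc.
Qed.

Lemma commMr g h z : g \in G -> h \in G -> z \in G ->
  [~ g, h * z] = [~ g, h] * [~ g, z].
Proof.
move=> Gg Gh Gz; rewrite commgMJ.
have -> : [~ g, h] ^ z = [~ g, h].
  by apply/conjg_fixP/commgP; apply: zc; rewrite ?commRc.
by apply: zc; rewrite ?commRc ?groupR.
Qed.

Lemma commVr g h : g \in G -> h \in G -> [~ g, h^-1] = [~ g, h]^-1.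
Proof.
move=> Gg Gh; apply: commgV; apply: commute_sym; apply: zc; rewrite ?commRc //.
Qed.

Definition cm (i j : nat) : gT := if i == j then c else 1.

Lemma xyc i j : i < n -> j < n -> [~ x i, y j] = cm i j.
Proof.
by move=> li lj; rewrite /cm; case: eqP => [->|/eqP ne]; [apply: hxy | apply: hxy'].
Qed.

Definition ax (i : nat) := if i == 1%N then x 0 * x 1%N else if i == 2 then x 1%N * x 2 else x i.
Definition ay (i : nat) := if i == 0 then y 0 * (y 1%N)^-1 * y 2
                   else if i == 1%N then y 1%N * (y 2)^-1 else y i.

Lemma axG i : i < n -> ax i \in G.
Proof.
have := n0; have := n1; have := n2 => ? ? ? li.
by rewrite /ax; case: eqP => _; [|case: eqP => _]; rewrite ?groupM ?xG.
Qed.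

Lemma ayG i : i < n -> ay i \in G.
Proof.
have := n0; have := n1; have := n2 => ? ? ? li.
by rewrite /ay; case: eqP => _; [|case: eqP => _]; rewrite ?groupM ?groupV ?yG.
Qed.

Lemma comm_ax_ay i j : i < n -> j < n -> [~ ax i, ay j] = cm i j.
Proof.
have := n0; have := n1; have := n2 => ? ? ? li lj.
case: i li => [|[|[|i]]] li; case: j lj => [|[|j]] lj; rewrite /ax /ay /=;
  rewrite ?commMl ?commMr ?commVr ?groupM ?groupV ?xG ?yG // ?xyc //= /cm /=;
  by rewrite ?(invg1, mulg1, mul1g, mulgV, mulVg).
Qed.


Lemma xpow g : g \in G -> g ^+ p = 1.
Proof. by move=> Gg; rewrite -expG expg_exponent. Qed.

Lemma abX : abelian <<[set x (val i) | i : 'I_n]>>.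
Proof.
rewrite abelian_gen; apply/centsP=> _ /imsetP[i _ ->] _ /imsetP[j _ ->].
by apply/commgP/eqP; apply: hx (ltn_ord i) (ltn_ord j).
Qed.

Lemma abY : abelian <<[set y (val i) | i : 'I_n]>>.
Proof.
rewrite abelian_gen; apply/centsP=> _ /imsetP[i _ ->] _ /imsetP[j _ ->].
by apply/commgP/eqP; apply: hy (ltn_ord i) (ltn_ord j).
Qed.

Lemma xX i : i < n -> x i \in <<[set x (val i) | i : 'I_n]>>.
Proof. by move=> li; rewrite mem_gen //; apply/imsetP; exists (Ordinal li). Qed.
Lemma yY i : i < n -> y i \in <<[set y (val i) | i : 'I_n]>>.
Proof. by move=> li; rewrite mem_gen //; apply/imsetP; exists (Ordinal li). Qed.

Lemma axX i : i < n -> ax i \in <<[set x (val i) | i : 'I_n]>>.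
Proof.
have := n0; have := n1; have := n2 => ? ? ? li.
by rewrite /ax; case: eqP => _; [|case: eqP => _]; rewrite ?groupM ?xX.
Qed.
Lemma ayY i : i < n -> ay i \in <<[set y (val i) | i : 'I_n]>>.
Proof.
have := n0; have := n1; have := n2 => ? ? ? li.
by rewrite /ay; case: eqP => _; [|case: eqP => _]; rewrite ?groupM ?groupV ?yY.
Qed.

Definition uu i : gT * gT := (x i, ax i).
Definition vv i : gT * gT := (y i, ay i).
Definition Gam := <<Wset uu n :|: Wset vv n>>.

Lemma card_Gam : #|Gam| <= p ^ (2 * n + 1).
Proof.
apply: (@card_bound _ uu vv (c, c)); first exact: prime_gt0.
- by move=> i li; rewrite /uu pairX !xpow ?xG ?axG.
- by move=> i li; rewrite /vv pairX !xpow ?yG ?ayG.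
- by rewrite pairX -oc expg_order.
- move=> i li; apply: pair_comm; apply: commute_sym; apply: zc (cycle_id c) _.
    exact: xG.
  exact: axG.
- move=> i li; apply: pair_comm; apply: commute_sym; apply: zc (cycle_id c) _.
    exact: yG.
  exact: ayG.
- move=> i j li lj; apply: pair_comm; first by apply/commgP/eqP; apply: hx.
  exact: (centsP abX) _ (axX li) _ (axX lj).
- move=> i j li lj; apply: pair_comm; first by apply/commgP/eqP; apply: hy.
  exact: (centsP abY) _ (ayY li) _ (ayY lj).
- move=> i j li lj; rewrite /uu /vv pairR xyc // comm_ax_ay // /cm.
  by case: eqP => _; [apply: cycle_id | apply: group1].
Qed.

Lemma fst_Gam : @fst gT gT @* Gam = G.
Proof.
rewrite /Gam morphim_gen ?subsetT // morphimEsub ?subsetT // imsetU !imset_Wset.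
by rewrite genG.
Qed.

Lemma injm_fst : 'injm (restrm (subsetT Gam) (@fst_morphism gT gT)).
Proof.
rewrite -card_im_injm morphim_restrm setIid fst_Gam eqn_leq.
have := leq_morphim (@fst_morphism gT gT) Gam; rewrite fst_Gam => ->.
by rewrite cardG card_Gam.
Qed.

Definition f0 := restrm (subsetT Gam) (@fst_morphism gT gT).
Lemma f0G : f0 @* Gam = G.
Proof. by rewrite morphim_restrm setIid fst_Gam. Qed.
Definition Finv := invm injm_fst.
Definition Fdef (g : gT) : gT := (Finv g).2.
Lemma FM : {in G &, {morph Fdef : g h / g * h}}.
Proof.
move=> g h Gg Gh.
have E : Finv (g * h) = Finv g * Finv h by apply: morphM; rewrite f0G.
exact: (congr1 snd E).
Qed.
Definition Fm : {morphism G >-> gT} := Morphism FM.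

Lemma inGam_u i : i < n -> uu i \in Gam.
Proof.
by move=> li; rewrite mem_gen // inE; apply/orP; left; apply/imsetP; exists (Ordinal li).
Qed.
Lemma inGam_v i : i < n -> vv i \in Gam.
Proof.
by move=> li; rewrite mem_gen // inE; apply/orP; right; apply/imsetP; exists (Ordinal li).
Qed.

Lemma Fu i : i < n -> Fdef (x i) = ax i.
Proof.
move=> li; rewrite /Fdef; have <- : f0 (uu i) = x i by [].
by rewrite /Finv invmE ?inGam_u.
Qed.
Lemma Fv i : i < n -> Fdef (y i) = ay i.
Proof.
move=> li; rewrite /Fdef; have <- : f0 (vv i) = y i by [].
by rewrite /Finv invmE ?inGam_v.
Qed.

Lemma sGam : Gam \subset setX G G.
Proof.
rewrite /Gam gen_subG; apply/subsetP => _ /setUP[] /imsetP[i _ ->];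
  by rewrite in_setX ?xG ?axG ?yG ?ayG ?ltn_ord.
Qed.

Lemma FG : Fm @* G = G.
Proof.
have := n0; have := n1; have := n2 => ? ? ? .
apply/eqP; rewrite eqEsubset; apply/andP; split.
  apply/subsetP => _ /morphimP[g _ Gg ->].
  rewrite -f0G in Gg; case/morphimP: Gg => w _ Gw ->.
  rewrite /= /Fdef /Finv invmE //.
  by have := subsetP sGam _ Gw; rewrite inE => /andP[].
have Mx : forall i, i < n -> ax i \in Fm @* G.
  move=> i li; have : Fdef (x i) \in Fm @* G := mem_morphim Fm (xG li) (xG li).
  by rewrite Fu.
have My : forall i, i < n -> ay i \in Fm @* G.
  move=> i li; have : Fdef (y i) \in Fm @* G := mem_morphim Fm (yG li) (yG li).
  by rewrite Fv.
have x0M : x 0 \in Fm @* G by exact: (Mx 0).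
have x1M : x 1%N \in Fm @* G.
  have -> : x 1%N = (x 0)^-1 * ax 1 by rewrite /ax /= mulKg.
  by rewrite groupM ?groupV ?Mx.
have x2M : x 2 \in Fm @* G.
  have -> : x 2 = (x 1%N)^-1 * ax 2 by rewrite /ax /= mulKg.
  by rewrite groupM ?groupV ?Mx.
have y2M : y 2 \in Fm @* G by exact: (My 2).
have y1M : y 1%N \in Fm @* G.
  have -> : y 1%N = ay 1 * y 2 by rewrite /ay /= mulgKV.
  by rewrite groupM ?My.
have y0M : y 0 \in Fm @* G.
  have -> : y 0 = ay 0 * (y 2)^-1 * y 1%N by rewrite /ay /= mulgK mulgKV.
  by apply: groupM; [apply: groupM; [apply: My | rewrite groupV] | ].
rewrite {1}genG gen_subG; apply/subsetP => _ /setUP[] /imsetP[[i li] _ ->] /=.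
  by case: i li => [|[|[|i]]] li //; exact: (Mx i.+3).
by case: i li => [|[|[|i]]] li //; exact: (My i.+3).
Qed.

Lemma injF : 'injm Fm.
Proof. by rewrite -card_im_injm FG. Qed.

Lemma exists_aut : exists2 a : {perm gT}, a \in Aut G &
  (forall i, i < n -> a (x i) = ax i) /\ (forall i, i < n -> a (y i) = ay i).
Proof.
exists (aut injF FG); first exact: Aut_aut.
by split=> i li; rewrite autE ?xG ?yG //; [apply: Fu | apply: Fv].
Qed.

End Construct.

Lemma rearr (gT : finGroupType) (y0 z w : gT) k m : commute w z ->
  y0 * z * w * (w ^+ k * z ^+ k) * w ^+ m = y0 * z ^+ k.+1 * w ^+ (m + k.+1)%N.
Proof.
move=> cwz.
rewrite mulgA -(mulgA (y0 * z) w) -expgS.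
rewrite -(mulgA (y0 * z)) (commuteX2 k.+1 k cwz) mulgA -(mulgA y0) -expgS.
rewrite -!mulgA; congr (_ * (_ * _)).
by rewrite addnC expgD.
Qed.

Section Order.
Variables (p n : nat) (gT : finGroupType) (G : {group gT}) (x y : nat -> gT) (c : gT).
Hypotheses (pr : prime p) (podd : odd p) (n3 : 3 <= n)
  (expG : exponent G = p)
  (genG : G :=: << [set x (val i) | i : 'I_n] :|: [set y (val i) | i : 'I_n] >>)
  (oc : #[c] = p)
  (hx : forall i j, i < n -> j < n -> [~ x i, x j] = 1)
  (hy : forall i j, i < n -> j < n -> [~ y i, y j] = 1)
  (hxy : forall i, i < n -> [~ x i, y i] = c).
Variable a : {perm gT}.
Hypotheses (aA : a \in Aut G) (hax : forall i, i < n -> a (x i) = ax x i)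
  (hay : forall i, i < n -> a (y i) = ay y i).

Let n0 : 0 < n. Proof. exact: leq_trans n3. Qed.
Let n1 : 1 < n. Proof. exact: leq_trans n3. Qed.
Let n2 : 2 < n. Proof. exact: n3. Qed.

Let xG i : i < n -> x i \in G.
Proof.
move=> li; rewrite genG mem_gen // inE; apply/orP; left; apply/imsetP.
by exists (Ordinal li).
Qed.
Let yG i : i < n -> y i \in G.
Proof.
move=> li; rewrite genG mem_gen // inE; apply/orP; right; apply/imsetP.
by exists (Ordinal li).
Qed.

Let aM g h : g \in G -> h \in G -> a (g * h) = a g * a h.
Proof. by move=> Gg Gh; rewrite -!(autmE aA) morphM. Qed.
Let aX g k : g \in G -> a (g ^+ k) = a g ^+ k.
Proof. by move=> Gg; rewrite -!(autmE aA) morphX. Qed.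
Let aV g : g \in G -> a (g^-1) = (a g)^-1.
Proof. by move=> Gg; rewrite -!(autmE aA) morphV. Qed.

Let cx i j : i < n -> j < n -> commute (x i) (x j).
Proof. by move=> li lj; apply/commgP/eqP; apply: hx. Qed.
Let cy i j : i < n -> j < n -> commute (y i) (y j).
Proof. by move=> li lj; apply/commgP/eqP; apply: hy. Qed.

Lemma pw_x1 k : (a ^+ k) (x 1%N) = x 0 ^+ k * x 1%N.
Proof.
elim: k => [|k IH]; first by rewrite expg0 perm1 mul1g.
rewrite expgSr permM IH aM ?groupX ?xG // aX ?xG // !hax // /ax /=.
by rewrite mulgA -expgSr.
Qed.

Lemma pw_x2 k : (a ^+ k) (x 2) = x 0 ^+ 'C(k, 2) * x 1%N ^+ k * x 2.
Proof.
elim: k => [|k IH]; first by rewrite expg0 perm1 !mul1g.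
rewrite expgSr permM IH !aM ?groupM ?groupX ?xG // !aX ?xG // !hax // /ax /=.
by rewrite (expgMn _ (cx n0 n1)) binS bin1 expgD expgSr !mulgA.
Qed.

Lemma pw_y1 k : (a ^+ k) (y 1%N) = y 1%N * (y 2)^-1 ^+ k.
Proof.
elim: k => [|k IH]; first by rewrite expg0 perm1 mulg1.
rewrite expgSr permM IH aM ?groupX ?groupV ?yG // aX ?groupV ?yG // aV ?yG //.
by rewrite !hay // /ay /= expgS mulgA.
Qed.

Lemma pw_y0 k : (a ^+ k) (y 0) = y 0 * (y 1%N)^-1 ^+ k * y 2 ^+ 'C(k.+1, 2).
Proof.
elim: k => [|k IH]; first by rewrite expg0 perm1 !mulg1.
rewrite expgSr permM IH !aM ?groupM ?groupX ?groupV ?yG // !aX ?groupV ?yG //.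
rewrite aV ?yG // !hay // /ay /= invMg invgK.
rewrite (expgMn _ (commuteV (cy n2 n1))) (binS k.+1 1) bin1.
by apply: rearr; apply: commuteV; apply: cy.
Qed.

Lemma xpow3 g : g \in G -> g ^+ p = 1.
Proof. by move=> Gg; rewrite -expG expg_exponent. Qed.

Lemma powp_dvd m g : g \in G -> p %| m -> g ^+ m = 1.
Proof. by move=> Gg /dvdnP[q ->]; rewrite mulnC expgM xpow3 // expg1n. Qed.

Lemma ap1 : a ^+ p = 1.
Proof.
have p2 : 2 < p.
  have := prime_gt1 pr; rewrite leq_eqVlt => /orP[/eqP p2|//].
  by move: podd; rewrite -p2.
have dC : p %| 'C(p, 2) by apply: prime_dvd_bin; rewrite // p2.
have bA : a ^+ p \in Aut G by rewrite groupX.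
have fix_gen : forall g, g \in G -> (a ^+ p) g = g.
  pose S := [set g in G | (a ^+ p) g == g].
  have gS : group_set S.
    apply/group_setP; split.
      by rewrite inE group1 /=; apply/eqP; exact: (morph1 (autm bA)).
    move=> g h /setIdP[Gg /eqP bg] /setIdP[Gh /eqP bh].
    have E : (a ^+ p) (g * h) = (a ^+ p) g * (a ^+ p) h := morphM (autm bA) Gg Gh.
    by rewrite inE groupM //= E bg bh.
  have sGS : G \subset Group gS.
    rewrite {1}genG gen_subG; apply/subsetP => _ /setUP[] /imsetP[[i li] _ ->] /=;
      rewrite inE ?xG ?yG //=; apply/eqP.
      case: i li => [|[|[|i]]] li.
      - by apply: permX_fix; rewrite hax.
      - by rewrite pw_x1 xpow3 ?xG // mul1g.
      - have e2 : x 0 ^+ 'C(p, 2) = 1 by exact: powp_dvd (xG n0) dC.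
        by rewrite pw_x2 e2 xpow3 ?xG // !mul1g.
      - by apply: permX_fix; rewrite hax.
    case: i li => [|[|i]] li.
    - have dC1 : p %| 'C(p.+1, 2) by rewrite binS bin1 dvdn_add ?dvdnn.
      have e1 : (y 1%N)^-1 ^+ p = 1 by rewrite xpow3 ?groupV ?yG.
      have e2 : y 2 ^+ 'C(p.+1, 2) = 1 by exact: powp_dvd (yG n2) dC1.
      by rewrite pw_y0 e1 e2 !mulg1.
    - by rewrite pw_y1 xpow3 ?groupV ?yG // mulg1.
    - by apply: permX_fix; rewrite hay.
  by move=> g Gg; have /setIdP[_ /eqP] := subsetP sGS g Gg.
apply: (eq_Aut bA (group1 _)) => g Gg; by rewrite fix_gen // perm1.
Qed.

Lemma order_a : #[a] = p.
Proof.
have a1 : a != 1.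
  apply/eqP=> a1; have := hax n1; rewrite a1 perm1 /ax /= => /esym.
  move/(congr1 (fun g => g * (x 1%N)^-1)); rewrite mulgK mulgV => x01.
  have := hxy n0; rewrite x01 comm1g => c1.
  by have := oc; rewrite -c1 order1 => p1; move: pr; rewrite -p1.
have : #[a] %| p by rewrite order_dvdn ap1.
case/primeP: (pr) => _ /[apply] /orP[/eqP o1|/eqP //].
by move/eqP: o1; rewrite order_eq1 (negPf a1).
Qed.

End Order.
Import Order.TTheory GRing.Theory Num.Theory.
Section Deg.
Local Open Scope ring_scope.

Lemma irr1_nat (hT : finGroupType) (H : {group hT}) (i : Iirr H) :
  exists k, 'chi_i 1%g = k%:R.
Proof. by apply/natrP; apply: Cnat_irr1. Qed.

Lemma deg_es (hT : finGroupType) (H : {group hT}) (p m : nat) :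
  prime p -> nilpotent H -> (H^`(1))%g = 'Z(H) -> #|'Z(H)| = p -> #|H : 'Z(H)| = (m ^ 2)%N ->
  forall i : Iirr H, 'chi_i \is a linear_char \/ 'chi_i 1%g = m%:R.
Proof.
move=> pr nilH DH cZ iZ i.
have [lin|nlin] := boolP ('chi_i \is a linear_char); [by left | right].
have ff : cfaithful 'chi_i.
  rewrite cfaithfulE; apply: contraR nlin => nt.
  have nK : cfker 'chi_i <| H := cfker_normal _.
  rewrite subG1 in nt; have := meet_center_nil nilH nK nt => ntI.
  rewrite lin_irr_der1 DH.
  have sI : cfker 'chi_i :&: 'Z(H) \subset 'Z(H) by apply: subsetIr.
  have eqI : cfker 'chi_i :&: 'Z(H) = 'Z(H).
    apply/eqP; rewrite eqEcard sI /= cZ.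
    have := cardSg sI; rewrite cZ => /(prime_nt_dvdP pr); rewrite -trivg_card1.
    by move=> /(_ ntI) ->.
  by rewrite -eqI subsetIl.
have Zc := cfcenter_fful_irr ff.
have ab : abelian (H / 'Z('chi_i)%CF) by rewrite Zc sub_der1_abelian // DH.
have := irr1_abelian_bound ab; rewrite Zc iZ.
have [k ->] := irr1_nat i.
by rewrite -natrX => /eqP; rewrite eqr_nat eqn_exp2r // => /eqP ->.
Qed.
End Deg.

Section SD.
Variables (gT : finGroupType) (G : {group gT}) (a : {perm gT}).
Hypothesis aA : a \in Aut G.
Local Notation to := (aut_groupAction G).
Local Notation s1 := (sdpair1 to).
Local Notation s2 := (sdpair2 to).
Local Notation N := (s1 @* G).
Local Notation A := (s2 @* <[a]>).

Lemma comm_s12 g : g \in G -> [~ s1 g, s2 a] = s1 (g^-1 * a g).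
Proof.
move=> Gg; rewrite commgEl -sdpair_act //.
have -> : to g a = a g by [].
have aG : a g \in G.
  by move: (Aut_closed aA Gg).
by rewrite -morphV // -morphM ?groupV.
Qed.

Local Notation Q := (sdprod_cyc_aut G a).

Lemma sA : <[a]> \subset Aut G. Proof. by rewrite cycle_subG. Qed.
Lemma nNA : A \subset 'N(N).
Proof. exact: subset_trans (morphimS _ sA) (im_sdpair_norm to). Qed.
Lemma QE : (Q : {set _}) = N * A.
Proof. by rewrite /sdprod_cyc_aut /= norm_joinEr // nNA. Qed.
Lemma tiNA : N :&: A = 1.
Proof. by apply/trivgP; rewrite -(im_sdpair_TI to) setIS // morphimS // sA. Qed.
Lemma cardN : #|N| = #|G|.
Proof. apply: card_injm; [exact: injm_sdpair1 | exact: subxx]. Qed.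
Lemma cardA : #|A| = #[a].
Proof. apply: card_injm; [exact: injm_sdpair2 | exact: sA]. Qed.
Lemma cardQ : #|Q| = (#|G| * #[a])%N.
Proof. by have := mul_cardG N A; rewrite tiNA cards1 muln1 -QE cardN cardA. Qed.
Lemma sNQ : N \subset Q.
Proof. exact: joing_subl. Qed.
Lemma nsNQ : N <| Q.
Proof. by rewrite /sdprod_cyc_aut /= normalYl nNA. Qed.
Lemma indexNQ : #|Q : N| = #[a].
Proof.
have := Lagrange sNQ; rewrite cardQ cardN => /eqP.
by rewrite eqn_pmul2l ?cardG_gt0 // => /eqP.
Qed.
Lemma abQN : abelian (Q / N).
Proof.
rewrite QE quotientMidl; apply: cyclic_abelian; apply: quotient_cyclic.
exact: morphim_cyclic (cycle_cyclic a).
Qed.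
Lemma derQ1 : Q^`(1) \subset N.
Proof. exact: der1_min (normal_norm nsNQ) abQN. Qed.

End SD.

Section SD2.
Variables (p n : nat) (gT : finGroupType) (G : {group gT}) (x y : nat -> gT) (c : gT)
  (a : {perm gT}).
Hypotheses (pr : prime p) (n3 : 3 <= n) (cardG : #|G| = (p ^ (2 * n + 1))%N)
  (genG : G :=: << [set x (val i) | i : 'I_n] :|: [set y (val i) | i : 'I_n] >>)
  (ZG : 'Z(G) = <[c]>) (DG : G^`(1) = <[c]>) (oc : #[c] = p)
  (hx : forall i j, i < n -> j < n -> [~ x i, x j] = 1)
  (hy : forall i j, i < n -> j < n -> [~ y i, y j] = 1)
  (hxy : forall i, i < n -> [~ x i, y i] = c)
  (aA : a \in Aut G) (ha1 : a (x 1%N) = x 0 * x 1%N) (ha2 : a (x 2) = x 1%N * x 2)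
  (hb0 : a (y 0) = y 0 * (y 1%N)^-1 * y 2) (hb1 : a (y 1%N) = y 1%N * (y 2)^-1)
  (oa : #[a] = p).

Local Notation to := (aut_groupAction G).
Local Notation s1 := (sdpair1 to).
Local Notation s2 := (sdpair2 to).
Local Notation N := (s1 @* G).
Local Notation A := (s2 @* <[a]>).
Local Notation Q := (sdprod_cyc_aut G a).

Let n0 : 0 < n. Proof. exact: leq_trans n3. Qed.
Let n1 : 1 < n. Proof. exact: leq_trans n3. Qed.
Let n2 : 2 < n. Proof. exact: n3. Qed.

Let xG i : i < n -> x i \in G.
Proof.
move=> li; rewrite genG mem_gen // inE; apply/orP; left; apply/imsetP.
by exists (Ordinal li).
Qed.
Let yG i : i < n -> y i \in G.
Proof.
move=> li; rewrite genG mem_gen // inE; apply/orP; right; apply/imsetP.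
by exists (Ordinal li).
Qed.

Let s1Q g : g \in G -> s1 g \in Q.
Proof. by move=> Gg; apply: (subsetP (sNQ G a)); apply: mem_morphim. Qed.
Let s2Q : s2 a \in Q.
Proof.
apply: (subsetP (joing_subr _ _)); apply: mem_morphim (cycle_id a).
exact: aA.
Qed.

Let c_ne1 : c != 1.
Proof.
apply/eqP=> c1; have := oc; rewrite c1 order1 => p1.
by move: pr; rewrite -p1.
Qed.

Lemma e1_in : s1 (x 1%N) \in Q^`(1).
Proof.
have -> : s1 (x 1%N) = [~ s1 (x 2), s2 a].
  rewrite comm_s12 ?xG // ha2; congr (s1 _).
  rewrite -conjgE; apply/esym/conjg_fixP; rewrite hx //.
by apply: mem_commg; rewrite ?s1Q ?xG.
Qed.

Lemma e2_in : s1 ((y 1%N)^-1) \in Q^`(1).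
Proof.
have -> : s1 ((y 1%N)^-1) = [~ s1 (y 0), s2 a] * [~ s1 (y 1%N), s2 a].
  rewrite !comm_s12 ?yG // hb0 hb1 -morphM ?groupM ?groupV ?yG //.
  by congr (s1 _); rewrite !mulgA mulVg mul1g mulgKV mulgK.
by rewrite groupM // mem_commg ?s1Q ?yG.
Qed.

Lemma Q2_nt : Q^`(2) != 1.
Proof.
have e3 : [~ s1 (x 1%N), s1 ((y 1%N)^-1)] \in Q^`(2).
  exact: mem_commg e1_in e2_in.
apply: contraTneq e3 => ->; rewrite inE -morphR ?groupV ?xG ?yG //.
rewrite morph_injm_eq1 ?groupR ?groupV ?xG ?yG //; last exact: injm_sdpair1.
apply: contra c_ne1 => /commgP cx; rewrite -(hxy n1); apply/commgP.
by have := commuteV cx; rewrite invgK.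
Qed.

Lemma Q3_triv : Q^`(3) = 1.
Proof.
have sN1 : Q^`(2) \subset N^`(1) := dergS 1 (derQ1 aA).
have DN : N^`(1) = s1 @* <[c]> by rewrite -morphim_der // DG.
have abN1 : abelian (N^`(1)) by rewrite DN morphim_abelian ?cycle_abelian.
apply/trivgP; apply: subset_trans (dergS 1 sN1) _.
by move/derG1P: abN1 => ->.
Qed.

Lemma dlQ : has_derived_length Q 3.
Proof.
split; first exact: Q3_triv.
move=> j; case: j => [|[|[|j]]] // _.
- apply: contraNneq Q2_nt => Q1; apply/eqP/trivgP.
  apply: subset_trans (der_sub 2 Q) _; by rewrite -Q1 derg0.
- apply: contraNneq Q2_nt => Q1; apply/eqP/trivgP.
  apply: subset_trans (der_sub 1 (Q^`(1))) _; by rewrite -Q1.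
- exact: Q2_nt.
Qed.

Section CD.
Local Open Scope ring_scope.

Lemma N_der : (N^`(1))%g = 'Z(N).
Proof.
rewrite -morphim_der // DG -ZG injm_center //; exact: injm_sdpair1.
Qed.

Lemma Z_N : 'Z(N) = s1 @* <[c]>.
Proof. by rewrite -N_der -morphim_der // DG. Qed.

Lemma cZN : #|'Z(N)| = p.
Proof.
rewrite Z_N card_injm ?oc //; first exact: injm_sdpair1.
by rewrite -DG der_sub.
Qed.

Lemma iZN : #|N : 'Z(N)| = ((p ^ n) ^ 2)%N.
Proof.
have := Lagrange (center_sub N); rewrite cZN (cardN G) cardG addn1 expnS => /eqP.
rewrite eqn_pmul2l ?prime_gt0 // => /eqP ->.
by rewrite -expnM mulnC.
Qed.

Lemma nilN : nilpotent N.
Proof.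
apply: (pgroup_nil (p:=p)); rewrite /pgroup (cardN G) cardG pnatX pnat_id //.
Qed.

Lemma degN (t : Iirr N) : 'chi_t \is a linear_char \/ 'chi_t 1%g = (p ^ n)%:R.
Proof. exact: deg_es pr nilN N_der cZN iZN t. Qed.

Lemma cardQ2 : #|Q| = (p ^ (2 * n + 2))%N.
Proof. by rewrite (cardQ aA) cardG oa -expnSr -addnS. Qed.

Lemma degQ_pow (i : Iirr Q) : exists2 e, (e <= 2 * n + 2)%N & 'chi_i 1%g = (p ^ e)%:R.
Proof.
have [k Ek] := irr1_nat i.
have := dvd_irr1_cardG i; rewrite Ek cardQ2 dvdC_nat => /(dvdn_pfactor _ _ pr)[e le ->].
by exists e.
Qed.

Lemma deg_over (i : Iirr Q) (t : Iirr N) : t \in irr_constt ('Res[N] 'chi_i) ->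
  'chi_i 1%g <= p%:R * 'chi_t 1%g /\ 'chi_t 1%g <= 'chi_i 1%g.
Proof.
move=> Ht; split.
  rewrite -constt_Ind_Res in Ht.
  have := char1_ge_constt (cfInd_char Q (irr_char t)) Ht.
  by rewrite cfInd1 ?(sNQ G a) // (indexNQ aA) oa.
by have := char1_ge_constt (cfRes_char N (irr_char i)) Ht; rewrite cfRes1.
Qed.

Lemma deg_lin (i : Iirr Q) (t : Iirr N) : t \in irr_constt ('Res[N] 'chi_i) ->
  'chi_t \is a linear_char -> 'chi_i 1%g = 1 \/ 'chi_i 1%g = p%:R.
Proof.
move=> Ht lin; have [le _] := deg_over Ht; rewrite (lin_char1 lin) mulr1 in le.
have [e _ Ee] := degQ_pow i; rewrite Ee ler_nat -{2}(expn1 p) leq_exp2l ?prime_gt1 // in le.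
by case: e le Ee => [|[|]] // _ ->; [left | right; rewrite expn1].
Qed.

Lemma chi0_1 : 'chi[Q]_0 1%g = 1.
Proof. by rewrite irr0 cfun1E group1. Qed.

Lemma deg_big (i : Iirr Q) (t : Iirr N) : t \in irr_constt ('Res[N] 'chi_i) ->
  'chi_t 1%g = (p ^ n)%:R -> 'chi_i 1%g = (p ^ n)%:R.
Proof.
move=> Ht Et; have [_ ge] := deg_over Ht; rewrite Et in ge.
have [e _ Ee] := degQ_pow i; rewrite Ee ler_nat leq_exp2l ?prime_gt1 // in ge.
have p1 : (1 < p)%N := prime_gt1 pr.
have i0 : i != 0.
  apply/eqP=> i0; move: Ee; rewrite i0 chi0_1 => /esym/eqP; rewrite pnatr_eq1.
  rewrite -(expn0 p) eqn_exp2l // => /eqP e0; move: ge; rewrite e0 leqn0.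
  by move=> /eqP n0'; move: n3; rewrite n0'.
have hs := irr_sum_square Q.
rewrite (bigD1 0) //= (bigD1 i) //= chi0_1 expr1n in hs.
have rest : 0 <= \sum_(j < Nirr Q | (j != 0) && (j != i)) ('chi_j 1%g) ^+ 2.
  by apply: sumr_ge0 => j _; apply: exprn_ge0; apply: ltW; apply: irr1_gt0.
have : ('chi_i 1%g) ^+ 2 < #|Q|%:R.
  rewrite -hs addrCA ltrDl; apply: (lt_le_trans ltr01); rewrite lerDl.
  exact: rest.
rewrite Ee -natrX ltr_nat cardQ2 -expnM ltn_exp2l // => lt.
have -> : e = n by apply/eqP; rewrite eqn_leq ge andbT; lia.
by [].
Qed.

Lemma cd_sub (i : Iirr Q) :
  [\/ 'chi_i 1%g = 1, 'chi_i 1%g = p%:R | 'chi_i 1%g = (p ^ n)%:R].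
Proof.
have [t Ht] := neq0_has_constt (Res_irr_neq0 N i).
case: (degN t) => [lin|big].
  by case: (deg_lin Ht lin) => ->; [apply: Or31 | apply: Or32].
by apply: Or33; apply: deg_big Ht big.
Qed.

Lemma cG5 : c \in G.
Proof. by have := cycle_id c; rewrite -ZG => /setIP[]. Qed.

Lemma s1c_ne1 : s1 c != 1%g.
Proof.
rewrite morph_injm_eq1 //; first exact: injm_sdpair1.
exact: cG5.
Qed.

Lemma exists_nonlin : exists t : Iirr N, 'chi_t 1%g = (p ^ n)%:R.
Proof.
have : ~~ [forall t : Iirr N, 'chi_t \is a linear_char].
  apply/negP => /forallP all.
  have : (N^`(1))%g \subset \bigcap_t cfker 'chi[N]_t.
    by apply/bigcapsP => t _; rewrite -lin_irr_der1 all.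
  have s1cZ : s1 c \in s1 @* <[c]> by apply: mem_morphim; [exact: cG5 | exact: cycle_id].
  rewrite TI_cfker_irr N_der Z_N => /subsetP/(_ _ s1cZ).
  by rewrite inE (negPf s1c_ne1).
case/forallPn => t nlin; exists t.
by case: (degN t) => // lin; rewrite lin in nlin.
Qed.

Lemma exists_lin : exists2 l : Iirr N, 'chi_l \is a linear_char & 'chi_l (s1 (x 0)) != 1.
Proof.
have : ~~ [forall l : Iirr N, ('chi_l \is a linear_char) ==> ('chi_l (s1 (x 0)) == 1)].
  apply/negP => /forallP all.
  have : s1 (x 0) \in \bigcap_(l | 'chi[N]_l \is a linear_char) cfker 'chi_l.
    apply/bigcapP => l lin; rewrite cfkerEirr inE (lin_char1 lin).
    by have := all l; rewrite lin.
  rewrite cap_cfker_lin_irr -morphim_der // DG => /morphimP[w Dw cw E].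
  have xw := injmP (injm_sdpair1 to) _ _ (xG n0) Dw E.
  have : commute (x 0) (y 0).
    rewrite xw; have := cw; rewrite -ZG => /setIP[_ /centP Cw]; apply: Cw.
    exact: yG.
  move/commgP; rewrite hxy //; apply/negP; exact: c_ne1.
case/forallPn => l; rewrite negb_imply => /andP[lin ne]; by exists l.
Qed.

Lemma pn_in_cd : exists i : Iirr Q, 'chi_i 1%g = (p ^ n)%:R.
Proof.
have [t Et] := exists_nonlin.
have [i Hi] := neq0_has_constt (Ind_irr_neq0 t (sNQ G a)).
rewrite constt_Ind_Res in Hi; exists i; exact: deg_big Hi Et.
Qed.

Lemma p_in_cd : exists i : Iirr Q, 'chi_i 1%g = p%:R.
Proof.
have [l lin ne] := exists_lin.
have [i Hi] := neq0_has_constt (Ind_irr_neq0 l (sNQ G a)).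
rewrite constt_Ind_Res in Hi; exists i.
case: (deg_lin Hi lin) => // h1.
have lin_i : 'chi_i \is a linear_char by rewrite qualifE/= irr_char h1 eqxx.
have linR := cfRes_lin_char N lin_i.
have /irrP[r Er] := lin_char_irr linR.
move: Hi; rewrite Er constt_irr inE => /eqP El; rewrite -El in Er.
have x0N : s1 (x 0) \in N by apply: mem_morphim; apply: xG.
have x1N : s1 (x 1%N) \in N by apply: mem_morphim; apply: xG.
have E2 : s1 (a (x 1%N)) = (s1 (x 1%N) ^ s2 a)%g := sdpair_act to (xG n1) aA.
have E3 : (s1 (x 0) * s1 (x 1%N))%g = (s1 (x 1%N) ^ s2 a)%g.
  rewrite -E2 ha1; symmetry; exact: (morphM (sdpair1_morphism to) (xG n0) (xG n1)).
have E : 'chi_i (s1 (x 0) * s1 (x 1%N))%g = 'chi_i (s1 (x 1%N)).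
  rewrite E3 cfunJ //; exact: s2Q.
rewrite (lin_charM lin_i) ?s1Q ?xG // in E.
have nz : 'chi_i (s1 (x 1%N)) != 0 by apply: lin_char_neq0; rewrite ?s1Q ?xG.
have E1 : 'chi_i (s1 (x 0)) = 1.
  by apply: (mulIf nz); rewrite mul1r.
move: ne; rewrite -Er cfResE ?(sNQ G a) // E1 eqxx //.
Qed.

Lemma cd_Q : cd Q =i [:: 1; p%:R; (p ^ n)%:R].
Proof.
move=> d; rewrite !inE; apply/existsP/idP => [[i /eqP <-]|].
  by case: (cd_sub i) => ->; rewrite eqxx ?orbT.
case/or3P => /eqP ->.
- by exists 0; rewrite chi0_1.
- by have [i Ei] := p_in_cd; exists i; rewrite Ei.
- by have [i Ei] := pn_in_cd; exists i; rewrite Ei.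
Qed.

End CD.
End SD2.

Theorem mainTheorem1 (p n : nat) (gT : finGroupType) (G : {group gT})
    (x y : nat -> gT) (c : gT) :
  prime p -> odd p -> 3 <= n ->
  extraspecial G -> #|G| = (p ^ (2 * n + 1))%N -> exponent G = p ->
  G :=: << [set x (val i) | i : 'I_n] :|: [set y (val i) | i : 'I_n] >> ->
  'Z(G) = <[c]> -> G^`(1) = <[c]> -> #[c] = p ->
  (forall i j, i < n -> j < n -> [~ x i, x j] = 1) ->
  (forall i j, i < n -> j < n -> [~ y i, y j] = 1) ->
  (forall i, i < n -> [~ x i, y i] = c) ->
  (forall i j, i < n -> j < n -> i != j -> [~ x i, y j] = 1) ->
  exists2 a : {perm gT}, a \in Aut G &
    [/\ [/\ a (x 0%N) = x 0%N, a (x 1%N) = x 0%N * x 1%N, a (x 2%N) = x 1%N * x 2%N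
           & forall i, 3 <= i < n -> a (x i) = x i],
        [/\ a (y 0%N) = y 0%N * (y 1%N)^-1 * y 2%N, a (y 1%N) = y 1%N * (y 2%N)^-1
           & forall i, 2 <= i < n -> a (y i) = y i],
        #[a] = p,
        has_derived_length (sdprod_cyc_aut G a) 3
      & cd (sdprod_cyc_aut G a) =i [:: 1%R; p%:R; (p ^ n)%N%:R]%R].
Proof.
move=> pr podd n3 _ cardG expG genG ZG DG oc hx hy hxy hxy'.
have n0 : 0 < n by apply: leq_trans n3.
have n1 : 1 < n by apply: leq_trans n3.
have n2 : 2 < n by [].
have [a aA [hax hay]] := exists_aut pr n3 cardG expG genG ZG DG oc hx hy hxy hxy'.
have oa := order_a pr podd n3 expG genG oc hx hy hxy aA hax hay.
have ha1 : a (x 1%N) = x 0 * x 1%N by rewrite hax.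
have ha2 : a (x 2) = x 1%N * x 2 by rewrite hax.
have hb0 : a (y 0) = y 0 * (y 1%N)^-1 * y 2 by rewrite hay.
have hb1 : a (y 1%N) = y 1%N * (y 2)^-1 by rewrite hay.
exists a => //; split.
- split => //; first by rewrite hax.
  move=> i /andP[i3 lin]; rewrite hax // /ax.
  case: i i3 lin => [|[|[|i]]] //.
- split => //.
  move=> i /andP[i2 lin]; rewrite hay // /ay.
  case: i i2 lin => [|[|i]] //.
- exact: oa.
- exact: dlQ pr n3 genG DG oc hx hxy aA ha2 hb0 hb1.
- exact: cd_Q pr n3 cardG genG ZG DG oc hxy aA ha1 oa.
Qed.
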